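(* For $\alpha_1,\alpha_2\in\mathbf{C}$, the superalgebras $B_{2,\alpha_1}$ and $B_{2,\alpha_2}$ are isomorphic if and only if $\alpha_1=\alpha_2$.
   Context: Isomorphisms are even bijective linear maps preserving the product. For $\alpha\in\mathbf{C}$, put $\beta=1+\alpha$, $\gamma=1-\alpha$. $B_{2,\alpha}$ is the superalgebra on the superspace with ordered basis $(x_1,x_2,x_3,x_4,y_1,y_2,y_3,y_4)$ ($x_i$ even, $y_j$ odd) given by left multiplication matrices $L(a)$, whose $j$-th column is the coordinate vector of $a\cdot(\text{$j$-th basis vector})$. Write $L(a)=\begin{pmatrix}P&Q\\R&S\end{pmatrix}$ with $4\times4$ blocks; for $a=x_i$, $Q=R=0$; for $a=y_j$, $P=S=0$. Rows separated by semicolons: $L(x_1)$: $P=[0,0,-1,\beta;0,0,0,0;0,\beta/2,0,0;0,\tfrac12,0,0]$, $S=0$. $L(x_2)$: $P=[0,0,0,0;0,0,1,\gamma;-\gamma/2,0,0,0;\tfrac12,0,0,0]$, $S=0$. $L(x_3)$: $P=[1,0,0,0;0,-1,0,0;0,0,\alpha,\beta\gamma;0,0,1,-\alpha]$, $S=0$. $L(x_4)$: $P=[\beta,0,0,0;0,\gamma,0,0;0,0,\beta\gamma,-\alpha\beta\gamma;0,0,-\alpha,1+\alpha^2]$, $S=\mathrm{diag}(2-\alpha,2+\alpha,\alpha,-\alpha)$. $L(y_1)$: $Q=[0,0,0,0;0,0,0,\alpha\beta/4;0,0,-\alpha\gamma/4,0;0,0,\alpha/4,0]$, $R=[0,0,1,\gamma;1,0,0,0;0,0,0,0;0,0,0,0]$.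 $L(y_2)$: $Q=[0,0,-\alpha/2,0;0,0,0,0;0,0,0,-\alpha\beta/4;0,0,0,-\alpha/4]$, $R=[0,1,0,0;0,0,-1,\beta;0,0,0,0;0,0,0,0]$. $L(y_3)$: $Q=[0,1+\alpha/2,0,0;0,0,0,0;(\alpha\gamma+2)/4,0,0,0;(2-\alpha)/4,0,0,0]$, $R=[0,0,0,0;0,0,0,0;0,0,-1,\beta;0,-1,0,0]$. $L(y_4)$: $Q=[0,0,0,0;1-\alpha\beta/4,0,0,0;0,(\alpha\beta-2)/4,0,0;0,(\alpha+2)/4,0,0]$, $R=[0,0,0,0;0,0,0,0;-1,0,0,0;0,0,1,\gamma]$. *)

(* Defs.v *)
From HB Require Import structures.
From mathcomp Require Import all_boot all_order all_algebra.
From mathcomp Require Import complex.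
From mathcomp Require Import Rstruct.
Set Implicit Arguments. Unset Strict Implicit. Unset Printing Implicit Defensive.
Import Order.TTheory GRing.Theory Num.Theory.
Local Open Scope ring_scope.

Definition CC : Type := complex Rdefinitions.R.
HB.instance Definition _ := GRing.Field.on CC.

Definition ent (s : seq (seq CC)) (i j : nat) : CC := nth 0 (nth [::] s i) j.

Definition blk (P Q R S : seq (seq CC)) : 'M[CC]_8 :=
  \matrix_(i < 8, j < 8)
    if (i < 4)%N then (if (j < 4)%N then ent P i j else ent Q i (j - 4))
    else (if (j < 4)%N then ent R (i - 4) j else ent S (i - 4) (j - 4)).

Definition Z4 : seq (seq CC) := [:: [:: 0;0;0;0]; [:: 0;0;0;0]; [:: 0;0;0;0]; [:: 0;0;0;0]].

(* Left multiplication matrices L(e_k) of B_{2,alpha}; column j of L(a)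
   is the coordinate vector of a * (j-th basis vector).
   Basis order: x1,x2,x3,x4 (even), y1,y2,y3,y4 (odd). *)
Definition Lmat (a : CC) (k : 'I_8) : 'M[CC]_8 :=
  let b := 1 + a in let g := 1 - a in
  match val k with
  | 0 => blk [:: [:: 0; 0; -1; b]; [:: 0;0;0;0]; [:: 0; b/2; 0; 0]; [:: 0; 1/2; 0; 0]] Z4 Z4 Z4
  | 1 => blk [:: [:: 0;0;0;0]; [:: 0; 0; 1; g]; [:: -g/2; 0; 0; 0]; [:: 1/2; 0; 0; 0]] Z4 Z4 Z4
  | 2 => blk [:: [:: 1;0;0;0]; [:: 0;-1;0;0]; [:: 0;0;a;b*g]; [:: 0;0;1;-a]] Z4 Z4 Z4
  | 3 => blk [:: [:: b;0;0;0]; [:: 0;g;0;0]; [:: 0;0;b*g;-(a*b*g)]; [:: 0;0;-a;1+a^+2]] Z4 Z4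
             [:: [:: 2-a;0;0;0]; [:: 0;2+a;0;0]; [:: 0;0;a;0]; [:: 0;0;0;-a]]
  | 4 => blk Z4
             [:: [:: 0;0;0;0]; [:: 0;0;0;a*b/4]; [:: 0;0;-(a*g)/4;0]; [:: 0;0;a/4;0]]
             [:: [:: 0;0;1;g]; [:: 1;0;0;0]; [:: 0;0;0;0]; [:: 0;0;0;0]] Z4
  | 5 => blk Z4
             [:: [:: 0;0;-a/2;0]; [:: 0;0;0;0]; [:: 0;0;0;-(a*b)/4]; [:: 0;0;0;-a/4]]
             [:: [:: 0;1;0;0]; [:: 0;0;-1;b]; [:: 0;0;0;0]; [:: 0;0;0;0]] Z4
  | 6 => blk Z4
             [:: [:: 0;1+a/2;0;0]; [:: 0;0;0;0]; [:: (a*g+2)/4;0;0;0]; [:: (2-a)/4;0;0;0]]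
             [:: [:: 0;0;0;0]; [:: 0;0;0;0]; [:: 0;0;-1;b]; [:: 0;-1;0;0]] Z4
  | _ => blk Z4
             [:: [:: 0;0;0;0]; [:: 1-a*b/4;0;0;0]; [:: 0;(a*b-2)/4;0;0]; [:: 0;(a+2)/4;0;0]]
             [:: [:: 0;0;0;0]; [:: 0;0;0;0]; [:: -1;0;0;0]; [:: 0;0;1;g]] Z4
  end.

Definition Bmul (a : CC) (u v : 'cV[CC]_8) : 'cV[CC]_8 :=
  \sum_(k < 8) u k 0 *: (Lmat a k *m v).

(* Even coordinates are indices 0..3, odd ones 4..7. *)
Definition is_even_mx (f : 'M[CC]_8) : Prop :=
  forall i j : 'I_8, (i < 4)%N != (j < 4)%N -> f i j = 0.

Definition B2_iso (a1 a2 : CC) (f : 'M[CC]_8) : Prop :=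
  [/\ f \in unitmx, is_even_mx f &
      forall u v : 'cV[CC]_8, f *m Bmul a1 u v = Bmul a2 (f *m u) (f *m v)].

Definition B2_isomorphic (a1 a2 : CC) : Prop := exists f, B2_iso a1 a2 f.

(* Main.v *)
Require Import Defs.
From mathcomp Require Import all_boot all_order all_algebra ring.
From mathcomp Require Import complex Rstruct.
Import Order.TTheory GRing.Theory Num.Theory.
Local Open Scope ring_scope.
Set Implicit Arguments. Unset Strict Implicit.

Notation o i := (@Ordinal 8 i erefl).

Lemma sum8 (F : 'I_8 -> CC) : \sum_(k < 8) F k =
  F (o 0) + F (o 1) + F (o 2) + F (o 3) + F (o 4) + F (o 5) + F (o 6) + F (o 7).
Proof.
rewrite !big_ord_recr big_ord0 /= add0r.
by repeat (congr (_ + _)); congr F; apply/val_inj.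
Qed.

Ltac enum8 i := let h := fresh "h" in
  case: i => i h; do 8? (case: i h => [|i] h; [ | ]); try by [].

Definition dg (a : CC) (i : nat) : CC :=
  match i with 0 => 1 + 2 * a | 1 => 1 - 2 * a | 2 => 1 | 3 => 1
  | 4 => 2 - a | 5 => 2 + a | 6 => a | _ => - a end.

Lemma Lunit a (k i : 'I_8) :
  Lmat a k i (o 2) * a + Lmat a k i (o 3) = (k == i)%:R.
Proof.
enum8 k; enum8 i; rewrite /Lmat /blk !mxE /ent /=; ring.
Qed.

Lemma Ldiag a (m j : 'I_8) :
  a * Lmat a (o 2) m j + Lmat a (o 3) m j = (m == j)%:R * dg a j.
Proof.
enum8 m; enum8 j; rewrite /Lmat /blk !mxE /ent /=; ring.
Qed.

Lemma Bmul_entry a (u v : 'cV[CC]_8) i :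
  Bmul a u v i 0 = \sum_(k < 8) \sum_(l < 8) u k 0 * Lmat a k i l * v l 0.
Proof.
rewrite /Bmul summxE; apply: eq_bigr => k _.
rewrite !mxE big_distrr; apply: eq_bigr => l _ /=; ring.
Qed.

Lemma mul_delta (f : 'M[CC]_8) (p k : 'I_8) : (f *m (delta_mx p 0 : 'cV[CC]_8)) k 0 = f k p.
Proof.
rewrite mxE (bigD1 p) //= mxE !eqxx mulr1 big1 ?addr0 // => m /negbTE nm.
by rewrite mxE nm mulr0.
Qed.

Lemma delta_entry (p k : 'I_8) : (delta_mx p 0 : 'cV[CC]_8) k 0 = (k == p)%:R.
Proof. by rewrite mxE eqxx andbT. Qed.

Definition ea (a : CC) : 'cV[CC]_8 := \col_i (if val i == 2%N then a else if val i == 3%N then 1 else 0).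

Lemma sum_ea (F : 'I_8 -> CC) a : \sum_(l < 8) F l * ea a l 0 = F (o 2) * a + F (o 3).
Proof. rewrite sum8 !mxE /=; ring. Qed.

Lemma runit a (u : 'cV[CC]_8) : Bmul a u (ea a) = u.
Proof.
apply/matrixP => i j; rewrite (ord1 j) Bmul_entry.
under eq_bigr => k _ do (under eq_bigr => l _ do rewrite -mulrA; rewrite -big_distrr /= sum_ea Lunit).
rewrite (bigD1 i) //= eqxx mulr1 big1 ?addr0 // => k /negbTE nk.
by rewrite nk mulr0.
Qed.

Lemma Bmul_delta a (p q m : 'I_8) :
  Bmul a (delta_mx p 0) (delta_mx q 0) m 0 = Lmat a p m q.
Proof.
rewrite Bmul_entry (bigD1 p) //=.
rewrite [X in _ + X]big1; last first.
  move=> k nk; rewrite big1 // => l _; by rewrite delta_entry (negbTE nk) mul0r mul0r.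
rewrite addr0 (bigD1 q) //=.
rewrite [X in _ + X]big1; last first.
  move=> l nl; by rewrite !delta_entry (negbTE nl) eqxx mulr0.
by rewrite addr0 !delta_entry !eqxx mulr1 mul1r.
Qed.

Lemma sum_ea_L a (m l : 'I_8) :
  \sum_(k < 8) ea a k 0 * Lmat a k m l = (m == l)%:R * dg a l.
Proof. rewrite -Ldiag sum8 !mxE /=; ring. Qed.

Lemma Bmul_ea a (v : 'cV[CC]_8) m : Bmul a (ea a) v m 0 = dg a m * v m 0.
Proof.
rewrite Bmul_entry exchange_big /=.
under eq_bigr => l _ do rewrite -big_distrl /= sum_ea_L.
rewrite (bigD1 m) //= eqxx mul1r big1 ?addr0 // => l nl.
by rewrite eq_sym (negbTE nl) mul0r mul0r.
Qed.

Lemma Bmul_delta_l a (p : 'I_8) (v : 'cV[CC]_8) i :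
  Bmul a (delta_mx p 0) v i 0 = \sum_(l < 8) Lmat a p i l * v l 0.
Proof.
rewrite Bmul_entry (bigD1 p) //= [X in _ + X]big1; last first.
  move=> k nk; rewrite big1 // => l _; by rewrite delta_entry (negbTE nk) mul0r mul0r.
rewrite addr0; apply: eq_bigr => l _; by rewrite delta_entry eqxx mul1r.
Qed.

Lemma ord8_ind (P : 'I_8 -> Prop) :
  P (o 0) -> P (o 1) -> P (o 2) -> P (o 3) -> P (o 4) -> P (o 5) -> P (o 6) -> P (o 7) ->
  forall i, P i.
Proof.
move=> p0 p1 p2 p3 p4 p5 p6 p7 [i h].
case: i h => [|i] h; first by rewrite (_ : Ordinal h = o 0) //; apply/val_inj.
case: i h => [|i] h; first by rewrite (_ : Ordinal h = o 1) //; apply/val_inj.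
case: i h => [|i] h; first by rewrite (_ : Ordinal h = o 2) //; apply/val_inj.
case: i h => [|i] h; first by rewrite (_ : Ordinal h = o 3) //; apply/val_inj.
case: i h => [|i] h; first by rewrite (_ : Ordinal h = o 4) //; apply/val_inj.
case: i h => [|i] h; first by rewrite (_ : Ordinal h = o 5) //; apply/val_inj.
case: i h => [|i] h; first by rewrite (_ : Ordinal h = o 6) //; apply/val_inj.
case: i h => [|i] h; first by rewrite (_ : Ordinal h = o 7) //; apply/val_inj.
by [].
Qed.

Lemma lin1 (X Y l1 r1 c1 : CC) : l1 = r1 -> X - Y = c1 * (l1 - r1) -> X = Y.
Proof. move=> -> ; rewrite subrr mulr0 => /eqP; by rewrite subr_eq0 => /eqP. Qed.
Lemma lin2 (X Y l1 r1 l2 r2 c1 c2 : CC) : l1 = r1 -> l2 = r2 ->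
  X - Y = c1 * (l1 - r1) + c2 * (l2 - r2) -> X = Y.
Proof. move=> -> ->; rewrite !subrr !mulr0 addr0 => /eqP; by rewrite subr_eq0 => /eqP. Qed.
Lemma lin3 (X Y l1 r1 l2 r2 l3 r3 c1 c2 c3 : CC) : l1 = r1 -> l2 = r2 -> l3 = r3 ->
  X - Y = c1 * (l1 - r1) + c2 * (l2 - r2) + c3 * (l3 - r3) -> X = Y.
Proof. move=> -> -> ->; rewrite !subrr !mulr0 !addr0 => /eqP; by rewrite subr_eq0 => /eqP. Qed.

Section Iso.
Variables (a b : CC) (f : 'M[CC]_8).
Hypothesis H : B2_iso a b f.

Lemma key (p q i : 'I_8) :
  \sum_(m < 8) f i m * Lmat a p m q =
  \sum_(k < 8) \sum_(l < 8) f k p * Lmat b k i l * f l q.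
Proof.
case: H => _ _ /(_ (delta_mx p 0) (delta_mx q 0)) /matrixP /(_ i 0).
rewrite mxE Bmul_entry.
under eq_bigr => m _ do rewrite Bmul_delta.
move=> ->; apply: eq_bigr => k _; apply: eq_bigr => l _.
by rewrite !mul_delta.
Qed.

Lemma ev (i j : 'I_8) : (i < 4)%N != (j < 4)%N -> f i j = 0.
Proof. by case: H => _ e _; apply: e. Qed.

Lemma fu : f \in unitmx.
Proof. by case: H. Qed.

Lemma col_nz (j : 'I_8) : ~ (forall i, f i j = 0).
Proof.
move=> hz.
have h0 : f *m (delta_mx j 0 : 'cV[CC]_8) = 0.
  by apply/matrixP => i k; rewrite (ord1 k) mul_delta hz mxE.
have : (invmx f *m f) *m (delta_mx j 0 : 'cV[CC]_8) = 0 by rewrite -mulmxA h0 mulmx0.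
rewrite mulVmx ?fu // mul1mx => /matrixP /(_ j 0).
rewrite !mxE !eqxx /= => /eqP; by rewrite oner_eq0.
Qed.

Lemma row_nz (i : 'I_8) : ~ (forall j, f i j = 0).
Proof.
move=> hz.
have h0 : (delta_mx 0 i : 'rV[CC]_8) *m f = 0.
  apply/matrixP => k j; rewrite (ord1 k) !mxE (bigD1 i) //= mxE !eqxx mul1r hz add0r.
  by rewrite big1 // => m /negbTE nm; rewrite mxE nm andbF mul0r.
have : (delta_mx 0 i : 'rV[CC]_8) *m (f *m invmx f) = 0 by rewrite mulmxA h0 mul0mx.
rewrite mulmxV ?fu // mulmx1 => /matrixP /(_ 0 i).
rewrite !mxE !eqxx /= => /eqP; by rewrite oner_eq0.
Qed.

Lemma fea : f *m ea a = ea b.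
Proof.
set u := invmx f *m (delta_mx (o 2) 0 : 'cV[CC]_8).
have fu2 : f *m u = delta_mx (o 2) 0 by rewrite /u mulmxA mulmxV ?fu // mul1mx.
case: H => _ _ hm; have := hm u (ea a); rewrite runit fu2 => E.
have wE : forall l, (f *m ea a) l 0 = f l (o 2) * a + f l (o 3).
  by move=> l; rewrite mxE sum_ea.
have Ei : forall i, (i == o 2)%:R = \sum_(l < 8) Lmat b (o 2) i l * (f *m ea a) l 0.
  by move=> i; rewrite -Bmul_delta_l -E delta_entry.
have E0 := Ei (o 0); have E1 := Ei (o 1); have E2 := Ei (o 2); have E3 := Ei (o 3).
move: E0 E1 E2 E3; rewrite !sum8 !wE /Lmat /blk !mxE /ent /= => E0 E1 E2 E3.
have w3 : f (o 3) (o 2) * a + f (o 3) (o 3) = 1.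
  by apply: (lin2 (c1 := -1) (c2 := b) E2 E3); ring.
have w2 : f (o 2) (o 2) * a + f (o 2) (o 3) = b.
  by apply: (lin2 (c1 := -1) (c2 := b) E3 w3); ring.
apply/matrixP => i j; rewrite (ord1 j) wE mxE; move: i; apply: ord8_ind => /=.
- by apply: (lin1 (c1 := -1) E0); ring.
- by apply: (lin1 (c1 := 1) E1); ring.
- exact: w2.
- exact: w3.
all: by rewrite !ev ?mul0r ?add0r.
Qed.

Lemma diag (i j : 'I_8) : f i j * dg a j = dg b i * f i j.
Proof.
have := fea.
case: H => _ _ /(_ (ea a) (delta_mx j 0)) /matrixP /(_ i 0).
rewrite mxE => E fe; move: E; rewrite fe Bmul_ea mul_delta.
under eq_bigr => m _ do rewrite Bmul_ea delta_entry.
rewrite (bigD1 j) //= eqxx mulr1 big1 ?addr0 //.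
by move=> m nm; rewrite (negbTE nm) !mulr0.
Qed.

Lemma dz (i j : 'I_8) : dg a j - dg b i != 0 -> f i j = 0.
Proof.
move=> nz; have := diag i j => /eqP; rewrite -subr_eq0 (_ : _ - _ = f i j * (dg a j - dg b i)); last by ring.
by rewrite mulf_eq0 (negbTE nz) orbF => /eqP.
Qed.

End Iso.

Definition allowed (i j : nat) : bool :=
  [|| (i == 1%N) && (j == 0%N), (i == 0%N) && (j == 1%N),
      (1 < i < 4)%N && (1 < j < 4)%N,
      (i == 5%N) && (j == 4%N), (i == 4%N) && (j == 5%N),
      (i == 7%N) && (j == 6%N), (i == 6%N) && (j == 7%N),
      (i == 7%N) && (j == 4%N), (i == 6%N) && (j == 5%N),
      (i == 5%N) && (j == 6%N) | (i == 4%N) && (j == 7%N)].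

Definition shape (f : 'M[CC]_8) : 'M[CC]_8 :=
  \matrix_(i, j) if allowed i j then f i j else 0.

Definition blkf (P Q R S : seq (seq CC)) (i j : nat) : CC :=
    if (i < 4)%N then (if (j < 4)%N then ent P i j else ent Q i (j - 4))
    else (if (j < 4)%N then ent R (i - 4) j else ent S (i - 4) (j - 4)).

Definition Lf (a : CC) (k i l : nat) : CC :=
  let b := 1 + a in let g := 1 - a in
  match k with
  | 0 => blkf [:: [:: 0; 0; -1; b]; [:: 0;0;0;0]; [:: 0; b/2; 0; 0]; [:: 0; 1/2; 0; 0]] Z4 Z4 Z4
  | 1 => blkf [:: [:: 0;0;0;0]; [:: 0; 0; 1; g]; [:: -g/2; 0; 0; 0]; [:: 1/2; 0; 0; 0]] Z4 Z4 Z4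
  | 2 => blkf [:: [:: 1;0;0;0]; [:: 0;-1;0;0]; [:: 0;0;a;b*g]; [:: 0;0;1;-a]] Z4 Z4 Z4
  | 3 => blkf [:: [:: b;0;0;0]; [:: 0;g;0;0]; [:: 0;0;b*g;-(a*b*g)]; [:: 0;0;-a;1+a^+2]] Z4 Z4
             [:: [:: 2-a;0;0;0]; [:: 0;2+a;0;0]; [:: 0;0;a;0]; [:: 0;0;0;-a]]
  | 4 => blkf Z4
             [:: [:: 0;0;0;0]; [:: 0;0;0;a*b/4]; [:: 0;0;-(a*g)/4;0]; [:: 0;0;a/4;0]]
             [:: [:: 0;0;1;g]; [:: 1;0;0;0]; [:: 0;0;0;0]; [:: 0;0;0;0]] Z4
  | 5 => blkf Z4
             [:: [:: 0;0;-a/2;0]; [:: 0;0;0;0]; [:: 0;0;0;-(a*b)/4]; [:: 0;0;0;-a/4]]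
             [:: [:: 0;1;0;0]; [:: 0;0;-1;b]; [:: 0;0;0;0]; [:: 0;0;0;0]] Z4
  | 6 => blkf Z4
             [:: [:: 0;1+a/2;0;0]; [:: 0;0;0;0]; [:: (a*g+2)/4;0;0;0]; [:: (2-a)/4;0;0;0]]
             [:: [:: 0;0;0;0]; [:: 0;0;0;0]; [:: 0;0;-1;b]; [:: 0;-1;0;0]] Z4
  | _ => blkf Z4
             [:: [:: 0;0;0;0]; [:: 1-a*b/4;0;0;0]; [:: 0;(a*b-2)/4;0;0]; [:: 0;(a+2)/4;0;0]]
             [:: [:: 0;0;0;0]; [:: 0;0;0;0]; [:: -1;0;0;0]; [:: 0;0;1;g]] Z4
  end i l.

Lemma LmatE a (k i l : 'I_8) : Lmat a k i l = Lf a k i l.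
Proof.
case: k => k hk; rewrite /Lmat /Lf /=; case: k hk => [|[|[|[|[|[|[|[|n]]]]]]]] hk; by rewrite /blk mxE.
Qed.

Definition sf (f : 'M[CC]_8) (i j : 'I_8) : CC := if allowed i j then f i j else 0.

Ltac nzt a := rewrite /=; match goal with |- is_true (~~ (?e == _)) =>
  first [ have ->: e = 2 * a by ring | have ->: e = -2 * a by ring
        | have ->: e = 4 * a by ring | have ->: e = -4 * a by ring
        | have ->: e = 2 by ring | have ->: e = -2 by ring ] end;
  rewrite ?mulf_neq0 ?oppr_eq0 ?pnatr_eq0 //.

Lemma no_neg a f : B2_iso a (- a) f -> a != 0 -> False.
Proof.
move=> Hi a0.
have fs : f = shape f.
  apply/matrixP => i j; rewrite mxE; case: ifP => // /negbT.
  move: i; apply: ord8_ind; move: j; apply: ord8_ind => /=; try by [].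
  all: try (move=> _; first [ exact: (ev Hi) | apply: (dz Hi); nzt a ]).
have fsf : forall i j, f i j = sf f i j.
  by move=> i j; have := congr1 (fun M : 'M[CC]_8 => M i j) fs; rewrite /shape mxE.
have K : forall p q i : 'I_8, \sum_(m < 8) sf f i m * Lf a p m q =
  \sum_(k < 8) \sum_(l < 8) sf f k p * Lf (-a) k i l * sf f l q.
  move=> p q i; have := key Hi p q i.
  under eq_bigr => m _ do rewrite fsf LmatE.
  move=> ->; apply: eq_bigr => k _; apply: eq_bigr => l _.
  by rewrite !fsf LmatE.
have mu0 : f (o 0) (o 1) != 0.
  apply/negP => /eqP m0; apply: (col_nz Hi (j := o 1)); apply: ord8_ind;
  by rewrite fsf /sf /= ?m0.
have la0 : f (o 1) (o 0) != 0.
  apply/negP => /eqP m0; apply: (col_nz Hi (j := o 0)); apply: ord8_ind;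
  by rewrite fsf /sf /= ?m0.
have Z : forall x y : CC, y != 0 -> x * y = 0 -> x = 0.
  by move=> x y y0 /eqP; rewrite mulf_eq0 (negbTE y0) orbF => /eqP.
have z1 := K (o 7) (o 1) (o 5); rewrite !sum8 /sf /Lf /blkf /ent /= in z1.
have g14 : f (o 4) (o 7) = 0.
  apply: (Z _ _ mu0); by apply: (lin1 (c1 := -1) z1); ring.
have z2 := K (o 4) (o 1) (o 6); rewrite !sum8 /sf /Lf /blkf /ent /= in z2.
have g41 : f (o 7) (o 4) = 0.
  apply: (Z _ _ mu0); by apply: (lin1 (c1 := 1) z2); ring.
have z3 := K (o 6) (o 0) (o 4); rewrite !sum8 /sf /Lf /blkf /ent /= in z3.
have g23 : f (o 5) (o 6) = 0.
  apply: (Z _ _ la0); by apply: (lin1 (c1 := -1) z3); ring.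
have z4 := K (o 5) (o 0) (o 7); rewrite !sum8 /sf /Lf /blkf /ent /= in z4.
have g32 : f (o 6) (o 5) = 0.
  apply: (Z _ _ la0); by apply: (lin1 (c1 := 1) z4); ring.
have E1 := K (o 4) (o 7) (o 0); rewrite !sum8 /sf /Lf /blkf /ent /= ?g14 ?g41 ?g23 ?g32 in E1.
have E2 := K (o 7) (o 4) (o 0); rewrite !sum8 /sf /Lf /blkf /ent /= ?g14 ?g41 ?g23 ?g32 in E2.
have E3 := K (o 5) (o 6) (o 1); rewrite !sum8 /sf /Lf /blkf /ent /= ?g14 ?g41 ?g23 ?g32 in E3.
have E4 := K (o 6) (o 5) (o 1); rewrite !sum8 /sf /Lf /blkf /ent /= ?g14 ?g41 ?g23 ?g32 in E4.
have A1 : f (o 0) (o 1) * a * (a - 1) = 0.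
  by apply: (lin2 (c1 := 2 * (2 - a)) (c2 := - (2 * a)) E1 E2); field.
have A2 : f (o 1) (o 0) * a * (a + 1) = 0.
  by apply: (lin2 (c1 := - (4 + a - a * a)) (c2 := - (a * (1 - a))) E3 E4); field.
have ma : f (o 0) (o 1) * a != 0 by rewrite mulf_neq0.
have la : f (o 1) (o 0) * a != 0 by rewrite mulf_neq0.
have B1 := Z _ _ ma (etrans (mulrC _ _) A1).
have B2 := Z _ _ la (etrans (mulrC _ _) A2).
move/eqP: B1; rewrite subr_eq0 => /eqP a1.
move: B2; rewrite a1 -mulr2n => /eqP; by rewrite pnatr_eq0.
Qed.

Ltac nzg c := match goal with |- is_true (~~ (?e == _)) => have ->: e = c by ring end.

Theorem lemma3p5 (a1 a2 : CC) : B2_isomorphic a1 a2 <-> a1 = a2.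
Proof.
split; last first.
  move=> <-; exists 1%:M; split.
  - exact: unitmx1.
  - move=> i j nij; rewrite mxE; case: eqP => // eij; move: nij; by rewrite eij eqxx.
  - by move=> u v; rewrite !mul1mx.
case=> f Hi; case: (eqVneq a1 a2) => // nab; exfalso.
have d1 : a1 - a2 != 0 by rewrite subr_eq0.
case: (eqVneq a1 0) => [a0|a0].
  have b0 : a2 != 0 by rewrite -a0 eq_sym.
  apply: (row_nz Hi (i := o 0)); apply: ord8_ind;
  first [ exact: (ev Hi) | apply: (dz Hi); rewrite /= ?a0;
    first [nzg (-2 * a2) | nzg (2 * a2)]; rewrite mulf_neq0 ?oppr_eq0 ?pnatr_eq0 // ].
case: (eqVneq a2 (- a1)) => [e|nb]; first by rewrite e in Hi; exact: (no_neg Hi a0).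
have d2 : a1 + a2 != 0.
  by rewrite (_ : a1 + a2 = a2 - - a1) ?subr_eq0 //; ring.
apply: (col_nz Hi (j := o 0)); apply: ord8_ind;
first [ exact: (ev Hi) | apply: (dz Hi); rewrite /=;
  first [nzg (2 * (a1 - a2)) | nzg (2 * (a1 + a2)) | nzg (2 * a1)];
  rewrite mulf_neq0 ?oppr_eq0 ?pnatr_eq0 // ].
Qed.
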